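(* For $0<y<x\le1$ let $$f(x,y)=x^2y^2\,\frac{2(2-x-y)-\frac{(x-y)^2}{2-x-y}}{(x-y)^2},\qquad g(x,y)=x^2y^2\,\frac{2(2-x-y)-\frac{(x-y)^2}{2(2-x-y)}}{(x-y)^2},$$ $$B_2(x,y)=\frac{x+y+\frac14\,\frac{\left((x+y)\frac{f(x,y)}{xy}-xy\right)^2}{g(x,y)}}{\sqrt{x+\frac{g(x,y)}{xy}}}.$$ If $0<y<x\le1$, then $B_2(x,y)>0.9$. *)

(* Defs.v *)
From Stdlib Require Import Reals.
Open Scope R_scope.

Definition f (x y : R) : R :=
  x^2 * y^2 * ((2 * (2 - x - y) - (x - y)^2 / (2 - x - y)) / (x - y)^2).

Definition g (x y : R) : R :=
  x^2 * y^2 * ((2 * (2 - x - y) - (x - y)^2 / (2 * (2 - x - y))) / (x - y)^2).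

Definition B2 (x y : R) : R :=
  (x + y + / 4 * (((x + y) * (f x y / (x * y)) - x * y)^2 / g x y))
  / sqrt (x + g x y / (x * y)).

(* Main.v *)
Require Import Defs.
From Stdlib Require Import Reals.
From Stdlib Require Import Lra Psatz.
Open Scope R_scope.

Definition Pexpr (a d e : R) : R := 800*d*d*d*d*d*d*d*d*e*e*e*e + 2613*d*d*d*d*d*d*d*d*d*e*e*e + 3768*d*d*d*d*d*d*d*d*d*d*e*e + 2097*d*d*d*d*d*d*d*d*d*d*d*e + 342*d*d*d*d*d*d*d*d*d*d*d*d + 25600*a*d*d*d*d*d*d*d*e*e*e*e + 82234*a*d*d*d*d*d*d*d*d*e*e*e + 88097*a*d*d*d*d*d*d*d*d*d*e*e + 34221*a*d*d*d*d*d*d*d*d*d*d*e + 3558*a*d*d*d*d*d*d*d*d*d*d*d + 332800*a*a*d*d*d*d*d*d*e*e*e*e + 975600*a*a*d*d*d*d*d*d*d*e*e*e + 905170*a*a*d*d*d*d*d*d*d*d*e*e + 298322*a*a*d*d*d*d*d*d*d*d*d*e + 29552*a*a*d*d*d*d*d*d*d*d*d*d + 2252800*a*a*a*d*d*d*d*d*e*e*e*e + 5942944*a*a*a*d*d*d*d*d*d*e*e*e + 5013040*a*a*a*d*d*d*d*d*d*d*e*e + 1534984*a*a*a*d*d*d*d*d*d*d*d*e + 178488*a*a*a*d*d*d*d*d*d*d*d*d + 8499200*a*a*a*a*d*d*d*d*e*e*e*e + 20550400*a*a*a*a*d*d*d*d*d*e*e*e + 16157600*a*a*a*a*d*d*d*d*d*d*e*e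 + 4731808*a*a*a*a*d*d*d*d*d*d*d*e + 639008*a*a*a*a*d*d*d*d*d*d*d*d + 18022400*a*a*a*a*a*d*d*d*e*e*e*e + 40877568*a*a*a*a*a*d*d*d*d*e*e*e + 30435072*a*a*a*a*a*d*d*d*d*d*e*e + 8554496*a*a*a*a*a*d*d*d*d*d*d*e + 1294592*a*a*a*a*a*d*d*d*d*d*d*d + 21299200*a*a*a*a*a*a*d*d*e*e*e*e + 46010368*a*a*a*a*a*a*d*d*d*e*e*e + 32687616*a*a*a*a*a*a*d*d*d*d*e*e + 8746496*a*a*a*a*a*a*d*d*d*d*d*e + 1461248*a*a*a*a*a*a*d*d*d*d*d*d + 13107200*a*a*a*a*a*a*a*d*e*e*e*e + 27189248*a*a*a*a*a*a*a*d*d*e*e*e + 18468864*a*a*a*a*a*a*a*d*d*d*e*e + 4630528*a*a*a*a*a*a*a*d*d*d*d*e + 858112*a*a*a*a*a*a*a*d*d*d*d*d + 3276800*a*a*a*a*a*a*a*a*e*e*e*e + 6553600*a*a*a*a*a*a*a*a*d*e*e*e + 4251648*a*a*a*a*a*a*a*a*d*d*e*e + 974848*a*a*a*a*a*a*a*a*d*d*d*e + 204800*a*a*a*a*a*a*a*a*d*d*d*d.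

Lemma Pd_pos (a d e : R) (ha : 0 <= a) (hd : 0 < d) (he : 0 < e) :
  0 < Pexpr a d e.
Proof.
  unfold Pexpr.
  repeat (apply Rplus_lt_le_0_compat;
    [| repeat apply Rmult_le_pos; lra]).
  repeat apply Rmult_lt_0_compat; lra.
Qed.

Theorem lemma4 (x y : R) (hy : 0 < y) (hyx : y < x) (hx : x <= 1) :
  B2 x y > 9 / 10.
Proof.
  set (s := 2 - x - y). set (d := x - y). set (u := x + y).
  set (Q := 4 * s ^ 2 - d ^ 2).
  assert (hs : 0 < s) by (unfold s; lra).
  assert (hd : 0 < d) by (unfold d; lra).
  assert (hsd : d <= s) by (unfold s, d; lra).
  assert (hQ : 0 < Q) by (unfold Q; nra).
  set (E := u * s ^ 2 - d ^ 2).
  set (N := u + 2 * E ^ 2 / (s * d ^ 2 * Q)).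
  set (M := x + x * y * Q / (2 * s * d ^ 2)).
  assert (hxy : x * y <> 0) by (apply Rmult_integral_contrapositive; split; lra).
  assert (h1 : x - y <> 0) by lra. assert (h2 : 2 - x - y <> 0) by lra.
  assert (hQ' : 4 * (2 - x - y) ^ 2 - (x - y) ^ 2 <> 0) by (pose proof hQ as hh; unfold Q, s, d in hh; lra).
  assert (hM : x + g x y / (x * y) = M).
  { unfold g, M, Q, s, d. field. repeat split; try assumption; apply Rgt_not_eq; lra. }
  assert (hN : x + y + / 4 * (((x + y) * (Defs.f x y / (x * y)) - x * y)^2 / g x y) = N).
  { unfold g, Defs.f, N, E, Q, u, s, d. field. repeat split; try assumption; apply Rgt_not_eq; lra. }
  assert (hB : B2 x y = N / sqrt M) by (unfold B2; rewrite hM, hN; reflexivity).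
  rewrite hB.
  assert (hd2 : 0 < d ^ 2) by (apply pow_lt; lra).
  assert (hsd2 : 0 < s * d ^ 2) by (apply Rmult_lt_0_compat; lra).
  assert (hD : 0 < s * d ^ 2 * Q) by (apply Rmult_lt_0_compat; lra).
  assert (hM0 : 0 < M).
  { unfold M. assert (0 < x * y * Q / (2 * s * d ^ 2)); [|lra].
    apply Rdiv_lt_0_compat.
    { apply Rmult_lt_0_compat; [apply Rmult_lt_0_compat|]; lra. }
    { rewrite Rmult_assoc. apply Rmult_lt_0_compat; lra. } }
  assert (hN0 : 0 < N).
  { unfold N. assert (0 <= 2 * E ^ 2 / (s * d ^ 2 * Q)); [|unfold u; lra].
    unfold Rdiv. apply Rmult_le_pos.
    { apply Rmult_le_pos; [lra | apply pow2_ge_0]. }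
    { apply Rlt_le, Rinv_0_lt_compat; lra. } }
  assert (hkey : N ^ 2 - 81 / 100 * M = Pexpr (1 - x) (x - y) y / (200 * (s * d ^ 2 * Q) ^ 2)).
  { unfold Pexpr, N, M, E, Q, u, s, d. field. repeat split; assumption. }
  assert (hP : 0 < N ^ 2 - 81 / 100 * M).
  { rewrite hkey. apply Rdiv_lt_0_compat.
    - apply Pd_pos; lra.
    - assert (0 < s * d ^ 2 * Q) by (apply Rmult_lt_0_compat; nra). nra. }
  pose proof (sqrt_sqrt M (Rlt_le _ _ hM0)) as hsq.
  pose proof (sqrt_lt_R0 M hM0) as hsp.
  apply Rlt_gt. apply Rmult_lt_reg_r with (sqrt M); auto.
  unfold Rdiv at 2. rewrite Rmult_assoc, Rinv_l by lra. rewrite Rmult_1_r.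
  nra.
Qed.
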